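(* For every base $b\ge 2$ there exist infinitely many $b$-wARH numbers that are not $b$-MRH numbers.
   Context: Fix a base $b\ge 2$. $s_b(N)$ is the sum of the base-$b$ digits of $N$. For a positive integer $X$, its reversal $X^R$ is the integer whose base-$b$ representation is that of $X$ written in reverse order (leading zeros of the result are dropped). A positive integer $N$ is a $b$-wARH number if there exists an integer $A\ge 0$ such that $N=(A+s_b(N))+(A+s_b(N))^R$. A positive integer $N$ is a $b$-MRH number if there exists a positive integer $M$ (a multiplicative multiplier) such that $N=(M s_b(N))\cdot (M s_b(N))^R$. *)

(* Defs.v *)
From mathcomp Require Import all_boot.
Set Implicit Arguments. Unset Strict Implicit. Unset Printing Implicit Defensive.

(* Base-b digits of n, least significant first; no leading (most significant)
   zero digits; digits of 0 is the empty list. Fuel = n suffices for b >= 2. *)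
Fixpoint digits_aux (b fuel n : nat) : seq nat :=
  match fuel with
  | 0 => [::]
  | fuel'.+1 => if n == 0 then [::] else (n %% b) :: digits_aux b fuel' (n %/ b)
  end.

Definition digits (b n : nat) : seq nat := digits_aux b n n.

Definition from_digits (b : nat) (ds : seq nat) : nat :=
  foldr (fun d acc => d + b * acc) 0 ds.

Definition digit_sum (b n : nat) : nat := sumn (digits b n).

(* X^R: digits written in reverse order (leading zeros of result dropped,
   which is automatic for the value) *)
Definition reversal (b n : nat) : nat := from_digits b (rev (digits b n)).

Definition wARH (b N : nat) : Prop :=
  0 < N /\ exists A : nat, N = (A + digit_sum b N) + reversal b (A + digit_sum b N).

Definition MRH (b N : nat) : Prop :=
  0 < N /\ exists M : nat, 0 < M /\
    N = (M * digit_sum b N) * reversal b (M * digit_sum b N).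

(* Main.v *)
Require Import Defs.
From mathcomp Require Import all_boot.
From mathcomp Require Import zify.

Lemma fd_cat b s t : from_digits b (s ++ t) = from_digits b s + b ^ size s * from_digits b t.
Proof.
elim: s => [|d s IH] /=; first by rewrite mul1n.
rewrite /from_digits /= -/(from_digits b (s ++ t)) -/(from_digits b s) IH.
by rewrite mulnDr mulnA -expnS addnA.
Qed.

Lemma fd_nseq0 b k : from_digits b (nseq k 0) = 0.
Proof. by elim: k => //= k IH; rewrite /from_digits /= -/(from_digits b _) IH muln0. Qed.

Lemma fd_cons b d s : from_digits b (d :: s) = d + b * from_digits b s.
Proof. by []. Qed.

Lemma fd0 b ds : 0 < b -> from_digits b ds = 0 -> all (fun d => d == 0) ds.
Proof.
move=> hb; elim: ds => // d ds IH; rewrite fd_cons => h.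
have hd : d = 0 by lia.
have hx : from_digits b ds = 0 by nia.
by rewrite /= hd IH.
Qed.

Lemma digits_fd b ds fuel : 1 < b -> all (fun d => d < b) ds -> last 1 ds != 0 ->
  from_digits b ds <= fuel -> digits_aux b fuel (from_digits b ds) = ds.
Proof.
move=> hb; elim: ds fuel => [|d ds IH] fuel.
  by case: fuel.
move=> /andP [hd hall] hl hle.
have hn : d + b * from_digits b ds != 0.
  apply/negP => /eqP h0.
  have hz := @fd0 b (d :: ds) (ltnW hb) h0.
  have : last d ds \in d :: ds by apply: mem_last.
  by move/(allP hz)=> /eqP e; rewrite /= e in hl.
case: fuel hle => [|f] hle; rewrite fd_cons in hle *.
  by move: hn; rewrite leqn0 in hle; rewrite (eqP hle).
rewrite /= (negbTE hn).
have hm : (d + b * from_digits b ds) %% b = d.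
  by rewrite addnC mulnC modnMDl modn_small.
have hq : (d + b * from_digits b ds) %/ b = from_digits b ds.
  by rewrite addnC mulnC divnMDl ?(ltnW hb) // divn_small // addn0.
rewrite hm hq IH //.
- by case: ds hl {IH hall hn hle hm hq} => //= x s.
- move/eqP: hn => hn; nia.
Qed.

Lemma good_digits b ds : 1 < b -> all (fun d => d < b) ds -> last 1 ds != 0 ->
  digits b (from_digits b ds) = ds.
Proof. by move=> hb ha hl; rewrite /digits digits_fd. Qed.

Lemma sumn_nseq1 n : sumn (nseq n 1) = n.
Proof. by elim: n => //= n ->; rewrite add1n. Qed.
Lemma sumn_nseq0 n : sumn (nseq n 0) = 0.
Proof. by elim: n. Qed.

Lemma last_n1 (s : seq nat) n : 0 < n -> last 1 (s ++ nseq n 1) = 1.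
Proof.
case: n => // n _; rewrite last_cat /=.
by elim: n => //= n ->.
Qed.

Lemma fd_n1 b n : 0 < n -> from_digits b (nseq n 1) = 1 + b * from_digits b (nseq n.-1 1).
Proof. by case: n. Qed.

Theorem proposition10 (b : nat) (hb : 2 <= b) :
  forall m : nat, exists N : nat, m < N /\ wARH b N /\ ~ MRH b N.
Proof.
move=> m.
pose dX := nseq (b + m) 0 ++ nseq b 1.
pose D := nseq b 1 ++ nseq m 0 ++ nseq b 1.
pose R := from_digits b (nseq b 1).
have h0b : 0 < b by lia.
have h1b : 1 < b by lia.
have aX : all (fun d => d < b) dX.
  by rewrite /dX all_cat !all_nseq h0b h1b !orbT.
have lX : last 1 dX != 0.
  by rewrite /dX last_n1.
have aD : all (fun d => d < b) D.
  by rewrite /D !all_cat !all_nseq h0b h1b !orbT.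
have lD : last 1 D != 0.
  by rewrite /D catA last_n1.
have hR : 1 <= R.
  by rewrite /R fd_n1 //; lia.
have eX : from_digits b dX = b ^ (b + m) * R by rewrite fd_cat fd_nseq0 size_nseq.
have erX : reversal b (from_digits b dX) = R.
  rewrite /reversal good_digits // /dX rev_cat !rev_nseq fd_cat fd_nseq0; lia.
have eD : from_digits b D = R + b ^ (b + m) * R.
  rewrite /D !fd_cat fd_nseq0 !size_nseq expnD /R; lia.
have sD : digit_sum b (from_digits b D) = b + b.
  by rewrite /digit_sum good_digits // /D !sumn_cat sumn_nseq1 sumn_nseq0.
have mD : from_digits b D %% b = 1.
  have e : b ^ b = b * b ^ b.-1 by rewrite -expnS prednK.
  rewrite /D fd_cat fd_n1 // size_nseq e -mulnA -addnA -mulnDr addnC mulnC modnMDl modn_small //.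
have hpow : b ^ 2 <= b ^ (b + m) by rewrite leq_pexp2l; lia.
have hpow2 : m < b ^ m by apply: ltn_expl.
have hpow3 : b ^ m <= b ^ (b + m) by rewrite leq_pexp2l; lia.
have h2b : b + b <= b ^ 2 by rewrite expnS expn1; nia.
exists (from_digits b D); split; last split.
- rewrite eD; nia.
- split; first by rewrite eD; nia.
  exists (from_digits b dX - (b + b)).
  rewrite sD subnK; last by rewrite eX; nia.
  by rewrite erX eD eX addnC.
- move=> [_ [M [_ HN]]].
  move: mD; rewrite {1}HN sD.
  have : b %| M * (b + b) * reversal b (M * (b + b)).
    by apply: dvdn_mulr; apply: dvdn_mull; rewrite addnn -mul2n dvdn_mull.
  by move/eqP => ->.
Qed.
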